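(* Let $G$ be a finite group and $X$ an $\mathtt{N}$-class of $G$. Then the partition of $X$ into its intersections with the $\circ$-classes of $G$ coincides with the partition of $X$ into $\diamond$-classes.
   Context: The power graph $\mathcal{P}(G)$ has vertex set $G$, and distinct $x,y$ are adjacent iff one is a positive integer power of the other. $x\mathtt{N}y$ iff $x$ and $y$ have the same closed neighbourhood in $\mathcal{P}(G)$. $x\diamond y$ iff $\langle x\rangle=\langle y\rangle$. $x\circ y$ iff $o(x)=o(y)$. Each $\mathtt{N}$-class is a union of $\diamond$-classes. *)

(* Defs.v *)
From mathcomp Require Import all_boot all_fingroup.
Set Implicit Arguments. Unset Strict Implicit. Unset Printing Implicit Defensive.
Local Open Scope group_scope.

(* Power graph of the finite group gT (the whole group = carrier type).
   Distinct x, y adjacent iff one is a positive integer power of the other. *)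
Definition pg_adj (gT : finGroupType) (x y : gT) : Prop :=
  x <> y /\
  ((exists n : nat, (0 < n)%N /\ y = x ^+ n) \/
   (exists n : nat, (0 < n)%N /\ x = y ^+ n)).

Definition in_closed_nbhd (gT : finGroupType) (x z : gT) : Prop :=
  z = x \/ pg_adj x z.

Definition Nrel (gT : finGroupType) (x y : gT) : Prop :=
  forall z : gT, in_closed_nbhd x z <-> in_closed_nbhd y z.

(* Main.v *)
Require Import Defs.
From mathcomp Require Import all_boot all_fingroup.

Lemma sub_eq_card (gT : finGroupType) (x y : gT) :
  y \in <[x]>%g -> #[x]%g = #[y]%g -> <[x]>%g = <[y]>%g.
Proof.
move=> Hy Ho; apply/eqP; rewrite eq_sym eqEcard cycle_subG Hy /=.
by rewrite -!orderE Ho.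
Qed.

(* Within any N-class X: x o y (same order) iff x <> y (same cyclic subgroup). *)
Theorem mainTheorem15 (gT : finGroupType) (x y : gT) :
  Nrel x y -> (#[x]%g = #[y]%g <-> <[x]>%g = <[y]>%g).
Proof.
move=> HN; split; last by move=> E; rewrite /order E.
move=> Ho.
have [H|H] := proj2 (HN y) (or_introl erefl).
  by rewrite H.
case: H => _ [[n [_ Ey]]|[n [_ Ex]]].
  by apply: sub_eq_card => //; rewrite Ey; exact: mem_cycle.
apply/esym/sub_eq_card; last by rewrite Ho.
by rewrite Ex; exact: mem_cycle.
Qed.
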